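(* Let \(a,b,c\) be positive integers, \(m\) a positive integer that is not a perfect square, with \(\gcd(am,b^2-c^2m)=1\), and let \(A,B\in\mathbb Z\). If \((x_0,y_0,z_0,w_0)\in\mathbb Z^4\) and \((x',y',z',w')\in\mathbb Z^4\) are both solutions of \(a\sqrt m(x+y\sqrt m)+(b+c\sqrt m)(z+w\sqrt m)=A+B\sqrt m\), then \(am\mid z_0-z'\) and \(a\mid w_0-w'\). *)

(* Defs.v *)
From Stdlib Require Export ZArith Reals.

Definition lhs9 (a b c m x y z w : Z) : R :=
  (IZR a * sqrt (IZR m) * (IZR x + IZR y * sqrt (IZR m))
   + (IZR b + IZR c * sqrt (IZR m)) * (IZR z + IZR w * sqrt (IZR m)))%R.

Definition rhs9 (m A B : Z) : R := (IZR A + IZR B * sqrt (IZR m))%R.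

(* Main.v *)
Require Import Defs.
From Stdlib Require Import ZArith Reals Lia Lra Psatz Znumtheory.

Lemma descent (m : Z) (hm : (0 < m)%Z) (hsq : ~ (exists k : Z, m = (k * k)%Z)) :
  forall n : nat, forall Q P : Z, (0 <= Q)%Z -> (Q < Z.of_nat n)%Z -> (0 <= P)%Z ->
  (m * Q * Q = P * P)%Z -> Q = 0%Z.
Proof.
  induction n as [|n IH]; intros Q P hQ hQn hP he; [lia|].
  destruct (Z.eq_dec Q 0) as [|hQ0]; [assumption|exfalso].
  set (s := Z.sqrt m).
  assert (hs1 : (s * s <= m)%Z) by (pose proof (Z.sqrt_spec m ltac:(lia)) as HH; unfold Z.succ in HH; unfold s; lia).
  assert (hs2 : (m < (s+1)*(s+1))%Z) by (pose proof (Z.sqrt_spec m ltac:(lia)) as HH; unfold Z.succ in HH; unfold s; lia).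
  assert (hs0 : (0 <= s)%Z) by (apply Z.sqrt_nonneg).
  assert (hns : s * s <> m) by (intro; apply hsq; exists s; lia).
  assert (hlt1 : (s*Q < P)%Z).
  { destruct (Z_lt_le_dec (s*Q) P) as [|h]; [assumption|].
    exfalso. assert (P*P <= (s*Q)*(s*Q))%Z by nia. nia. }
  assert (hlt2 : (P < (s+1)*Q)%Z).
  { destruct (Z_lt_le_dec P ((s+1)*Q)) as [|h]; [assumption|].
    exfalso. assert ((s+1)*Q*((s+1)*Q) <= P*P)%Z by nia. nia. }
  assert (H := IH (P - s*Q)%Z (m*Q - s*P)%Z).
  assert (hP' : (0 <= m*Q - s*P)%Z).
  { assert (m*Q*Q - s*P*Q >= 0)%Z by nia. nia. }
  assert (P - s*Q = 0)%Z.
  { apply (IH (P - s*Q)%Z (m*Q - s*P)%Z); try lia. nia. }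
  lia.
Qed.

Lemma nosq (m : Z) (hm : (0 < m)%Z) (hsq : ~ (exists k : Z, m = (k * k)%Z))
  (P Q : Z) : (IZR P + IZR Q * sqrt (IZR m))%R = 0%R -> P = 0%Z /\ Q = 0%Z.
Proof.
  intro h.
  assert (hr : (sqrt (IZR m) * sqrt (IZR m) = IZR m)%R).
  { apply sqrt_sqrt. apply IZR_le. lia. }
  assert (hQ : Q = 0%Z).
  { assert (he : (m * Q * Q = P * P)%Z).
    { apply eq_IZR. rewrite !mult_IZR.
      assert (IZR P = - (IZR Q * sqrt (IZR m)))%R by lra.
      rewrite H. set (r := sqrt (IZR m)) in *. rewrite <- hr. ring. }
    assert (Z.abs Q = 0)%Z.
    { apply (descent m hm hsq (S (Z.to_nat (Z.abs Q))) (Z.abs Q) (Z.abs P)); try lia. }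
    lia. }
  subst Q. split; [|reflexivity]. apply eq_IZR. lra.
Qed.

Theorem lemma9 (a b c m A B x0 y0 z0 w0 x1 y1 z1 w1 : Z)
  (ha : (0 < a)%Z) (hb : (0 < b)%Z) (hc : (0 < c)%Z) (hm : (0 < m)%Z)
  (hsq : ~ (exists k : Z, m = (k * k)%Z))
  (hgcd : Z.gcd (a * m) (b ^ 2 - c ^ 2 * m) = 1%Z)
  (h0 : lhs9 a b c m x0 y0 z0 w0 = rhs9 m A B)
  (h1 : lhs9 a b c m x1 y1 z1 w1 = rhs9 m A B) :
  (a * m | z0 - z1)%Z /\ (a | w0 - w1)%Z.
Proof.
  set (dx := (x0 - x1)%Z). set (dy := (y0 - y1)%Z).
  set (dz := (z0 - z1)%Z). set (dw := (w0 - w1)%Z).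
  assert (hr : (sqrt (IZR m) * sqrt (IZR m) = IZR m)%R).
  { apply sqrt_sqrt. apply IZR_le. lia. }
  assert (hd : (IZR (a*m*dy + b*dz + c*m*dw) + IZR (a*dx + b*dw + c*dz) * sqrt (IZR m))%R = 0%R).
  { assert (E : (lhs9 a b c m x0 y0 z0 w0 - lhs9 a b c m x1 y1 z1 w1 =
       IZR (a*m*dy + b*dz + c*m*dw) + IZR (a*dx + b*dw + c*dz) * sqrt (IZR m))%R).
    { unfold lhs9, dx, dy, dz, dw.
      repeat rewrite ?plus_IZR, ?mult_IZR, ?minus_IZR.
      set (r := sqrt (IZR m)) in *. rewrite <- hr. ring. }
    rewrite <- E, h0, h1. ring. }
  destruct (nosq m hm hsq _ _ hd) as [e1 e2].
  set (D := (b ^ 2 - c ^ 2 * m)%Z) in *.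
  assert (hrel : rel_prime (a*m) D).
  { apply Zgcd_1_rel_prime. exact hgcd. }
  split.
  - apply (Gauss (a*m) D dz).
    + exists (- b*dy + c*dx)%Z. unfold D. transitivity (b*(a*m*dy + b*dz + c*m*dw) - c*m*(a*dx + b*dw + c*dz) + (- b*dy + c*dx)*(a*m))%Z; [ring| rewrite e1, e2; ring].
    + exact hrel.
  - apply (Gauss a D dw).
    + exists (- b*dx + c*m*dy)%Z. unfold D. transitivity (b*(a*dx + b*dw + c*dz) - c*(a*m*dy + b*dz + c*m*dw) + (- b*dx + c*m*dy)*a)%Z; [ring| rewrite e1, e2; ring].
    + apply (rel_prime_div (a*m)). { exact hrel. } exists m. ring.
Qed.
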